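(* Let $X$ be a nonempty set and $\rho:X\times X\to[0,\infty)$ a function with $\rho(x,y)=0$ iff $x=y$ and $\rho(x,y)=\rho(y,x)$ for all $x,y$. Suppose that the topological space $(X,\mathcal T(\rho))$ is Hausdorff and compact, that $\rho$ is coherent, and that $T:X\to X$ satisfies $\rho(Tx,Ty)\le\lambda\rho(x,y)$ for some $\lambda\in[0,1)$ and all $x,y\in X$. Then $T$ has a unique fixed point.
   Context: $\mathcal T(\rho)$ is the topology on $X$ in which $U\subseteq X$ is open iff for every $x\in U$ there is $r>0$ with $B(x,r,\rho)=\{y\in X:\rho(x,y)<r\}\subseteq U$. The function $\rho$ is coherent if for all $a\in X$ and sequences $\{a_n\},\{b_n\}$ in $X$: $\lim_n\rho(a,a_n)=0$ and $\lim_n\rho(a_n,b_n)=0$ imply $\lim_n\rho(a,b_n)=0$. *)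

(* Defs.v *)
From Stdlib Require Import Reals List.
Open Scope R_scope.

Definition ball {X : Type} (rho : X -> X -> R) (x : X) (r : R) (y : X) : Prop :=
  rho x y < r.

Definition rho_open {X : Type} (rho : X -> X -> R) (U : X -> Prop) : Prop :=
  forall x, U x -> exists r, r > 0 /\ forall y, ball rho x r y -> U y.

Definition rho_hausdorff {X : Type} (rho : X -> X -> R) : Prop :=
  forall x y : X, x <> y ->
    exists U V : X -> Prop, rho_open rho U /\ rho_open rho V /\
      U x /\ V y /\ (forall z, ~ (U z /\ V z)).

Definition rho_compact {X : Type} (rho : X -> X -> R) : Prop :=
  forall (I : Type) (U : I -> X -> Prop),
    (forall i, rho_open rho (U i)) ->
    (forall x, exists i, U i x) ->
    exists l : list I, forall x, exists i, In i l /\ U i x.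

Definition coherent {X : Type} (rho : X -> X -> R) : Prop :=
  forall (a : X) (an bn : nat -> X),
    Un_cv (fun n => rho a (an n)) 0 ->
    Un_cv (fun n => rho (an n) (bn n)) 0 ->
    Un_cv (fun n => rho a (bn n)) 0.

(* Main.v *)
Require Import Defs.
From Stdlib Require Import Reals List Lra Lia Classical ClassicalEpsilon.
Open Scope R_scope.

Lemma cv_squeeze (u v : nat -> R) :
  (forall k, 0 <= u k <= v k) -> Un_cv v 0 -> Un_cv u 0.
Proof.
  intros H Hv eps He. destruct (Hv eps He) as [N HN]. exists N. intros n Hn.
  specialize (HN n Hn). specialize (H n). unfold R_dist in *.
  rewrite Rminus_0_r in *. rewrite Rabs_right by lra.
  rewrite Rabs_right in HN by lra. lra.
Qed.

Lemma cv_inv : Un_cv (fun k => 1 / (INR k + 1)) 0.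
Proof.
  intros eps He. destruct (archimed (1/eps)) as [H1 _].
  destruct (INR_unbounded (1/eps)) as [N HN]. exists N. intros n Hn.
  unfold R_dist. rewrite Rminus_0_r.
  assert (HnN : INR N <= INR n) by (apply le_INR; lia).
  assert (0 <= INR n) by apply pos_INR.
  rewrite Rabs_right.
  2:{ apply Rle_ge. unfold Rdiv. rewrite Rmult_1_l. left. apply Rinv_0_lt_compat. lra. }
  assert (1/eps < INR n + 1) by lra.
  apply (Rmult_lt_reg_r (INR n + 1)). lra.
  unfold Rdiv. rewrite Rmult_1_l, Rinv_l by lra.
  apply (Rmult_lt_reg_l (/eps)). apply Rinv_0_lt_compat; lra.
  rewrite Rmult_1_r, <- Rmult_assoc, Rinv_l by lra. lra.
Qed.

Lemma cv_pow (l c : R) (m : nat -> nat) : 0 <= l < 1 -> 0 <= c ->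
  (forall k, (k <= m k)%nat) -> Un_cv (fun k => c * l ^ (m k)) 0.
Proof.
  intros Hl Hc Hm eps He.
  destruct (pow_lt_1_zero l ltac:(rewrite Rabs_right; lra) (eps / (c + 1)))
    as [N HN].
  { apply Rdiv_lt_0_compat; lra. }
  exists N. intros n Hn. unfold R_dist. rewrite Rminus_0_r.
  assert (Hp := HN (m n) ltac:(specialize (Hm n); lia)).
  assert (0 <= l ^ m n) by (apply pow_le; lra).
  rewrite Rabs_right in Hp by lra.
  rewrite Rabs_right by (apply Rle_ge, Rmult_le_pos; lra).
  apply (Rmult_lt_compat_l (c+1)) in Hp; [|lra].
  replace ((c + 1) * (eps / (c + 1))) with eps in Hp by (field; lra).
  assert (c * l ^ m n <= (c+1) * l ^ m n) by nra. lra.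
Qed.

Theorem mainTheorem3 (X : Type) (x0 : X) (rho : X -> X -> R)
  (rho_nonneg : forall x y, 0 <= rho x y)
  (rho_zero : forall x y, rho x y = 0 <-> x = y)
  (rho_sym : forall x y, rho x y = rho y x)
  (Hhaus : rho_hausdorff rho) (Hcomp : rho_compact rho)
  (Hcoh : coherent rho)
  (T : X -> X) (lambda : R) (Hl0 : 0 <= lambda) (Hl1 : lambda < 1)
  (Hcontr : forall x y, rho (T x) (T y) <= lambda * rho x y) :
  exists! x : X, T x = x.
Proof.
  assert (uniq : forall x y, T x = x -> T y = y -> x = y).
  { intros x y Hx Hy. apply rho_zero. specialize (Hcontr x y).
    rewrite Hx, Hy in Hcontr. specialize (rho_nonneg x y). nra. }
  set (x := fun n => Nat.iter n T x0).
  assert (xS : forall n, x (S n) = T (x n)) by reflexivity.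
  assert (step : forall n, rho (x n) (x (S n)) <= lambda ^ n * rho (x 0%nat) (x 1%nat)).
  { induction n. simpl. lra. rewrite !xS. eapply Rle_trans. apply Hcontr.
    rewrite <- xS. rewrite <- tech_pow_Rmult.
    apply (Rmult_le_compat_l lambda) in IHn; [|lra]. rewrite <- xS, Rmult_assoc. exact IHn. } 
  set (O := fun N y => exists r, r > 0 /\ forall n, (n >= N)%nat -> r <= rho y (x n)).
  assert (Oopen : forall N, rho_open rho (O N)).
  { intros N y [r0 [Hr0 Hy]]. apply NNPP. intro Hno.
    assert (Hz : forall k : nat, exists p : X * nat,
      rho y (fst p) < 1 / (INR k + 1) /\ (snd p >= N)%nat /\
      rho (fst p) (x (snd p)) < 1 / (INR k + 1)).
    { intro k. assert (Hk : 0 < 1 / (INR k + 1)).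
      { apply Rdiv_lt_0_compat. lra. pose proof (pos_INR k). lra. }
      apply NNPP. intro Hn. apply Hno. exists (1 / (INR k + 1)). split. lra.
      intros z Hz. unfold ball in Hz. apply NNPP. intro HOz.
      apply HOz. apply NNPP. intro HOz'. apply HOz.
      exfalso. apply Hn.
      assert (Hex : exists n, (n >= N)%nat /\ rho z (x n) < 1 / (INR k + 1)).
      { apply NNPP. intro Hne. apply HOz'. exists (1 / (INR k + 1)). split. lra.
        intros n Hn'. apply Rnot_lt_le. intro Hlt. apply Hne. exists n. auto. }
      destruct Hex as [n [Hn1 Hn2]]. exists (z, n). simpl. auto. }
    apply choice in Hz. destruct Hz as [f Hf].
    assert (C : Un_cv (fun k => rho y (x (snd (f k)))) 0).
    { apply (Hcoh y (fun k => fst (f k))).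
      - apply (cv_squeeze _ _ (fun k => conj (rho_nonneg _ _) (Rlt_le _ _ (proj1 (Hf k))))).
        apply cv_inv.
      - apply (cv_squeeze _ _ (fun k => conj (rho_nonneg _ _) (Rlt_le _ _ (proj2 (proj2 (Hf k)))))).
        apply cv_inv. }
    destruct (C r0 Hr0) as [K HK]. specialize (HK K (le_n _)).
    unfold R_dist in HK. rewrite Rminus_0_r, Rabs_right in HK by (apply Rle_ge, rho_nonneg).
    specialize (Hy _ (proj1 (proj2 (Hf K)))). lra. }
  assert (Omono : forall N M y, (N <= M)%nat -> O N y -> O M y).
  { intros N M y HNM [r [Hr Hy]]. exists r. split. lra. intros n Hn. apply Hy. lia. }
  assert (Hclus : exists a, forall N r, r > 0 -> exists n, (n >= N)%nat /\ rho a (x n) < r).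
  { apply NNPP. intro Hn.
    assert (cover : forall y, exists N, O N y).
    { intro y. apply NNPP. intro HnO. apply Hn. exists y. intros N r Hr.
      apply NNPP. intro Hne. apply HnO. exists N, r. split. auto.
      intros n Hn'. apply Rnot_lt_le. intro Hlt. apply Hne. exists n. auto. }
    destruct (Hcomp nat O Oopen cover) as [l Hl].
    set (M := fold_right max 0%nat l).
    assert (HM : forall i, In i l -> (i <= M)%nat).
    { unfold M. clear. induction l; simpl; intros i Hi. contradiction.
      destruct Hi as [->|Hi]. lia. specialize (IHl i Hi). lia. }
    destruct (Hl (x M)) as [i [Hi HOi]].
    destruct (Omono _ _ _ (HM i Hi) HOi) as [r [Hr Hr']].
    specialize (Hr' M (le_n _)). assert (rho (x M) (x M) = 0) by (apply rho_zero; auto).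
    lra. }
  destruct Hclus as [a Ha].
  assert (Hs : forall k : nat, exists n, (n >= k)%nat /\ rho a (x n) < 1 / (INR k + 1)).
  { intro k. apply Ha. apply Rdiv_lt_0_compat. lra. pose proof (pos_INR k). lra. }
  apply choice in Hs. destruct Hs as [m Hm].
  assert (C1 : Un_cv (fun k => rho a (x (m k))) 0).
  { apply (cv_squeeze _ _ (fun k => conj (rho_nonneg _ _) (Rlt_le _ _ (proj2 (Hm k))))).
    apply cv_inv. }
  assert (C2 : Un_cv (fun k => rho a (x (S (m k)))) 0).
  { apply (Hcoh a (fun k => x (m k))). exact C1.
    apply (cv_squeeze _ (fun k => rho (x 0%nat) (x 1%nat) * lambda ^ m k)).
    intro k. split. apply rho_nonneg. rewrite Rmult_comm. apply step.
    apply cv_pow. lra. apply rho_nonneg. intro k. apply (proj1 (Hm k)). }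
  assert (C3 : Un_cv (fun k => rho (T a) (x (S (m k)))) 0).
  { apply (cv_squeeze _ (fun k => rho a (x (m k)))); [|exact C1].
    intro k. split. apply rho_nonneg. rewrite xS. eapply Rle_trans. apply Hcontr.
    specialize (rho_nonneg a (x (m k))). nra. }
  assert (Hfix : T a = a).
  { apply NNPP. intro Hne. destruct (Hhaus a (T a) (fun e => Hne (eq_sym e)))
      as [U [V [HU [HV [Ua [VTa Hdis]]]]]].
    destruct (HU a Ua) as [r1 [Hr1 H1]]. destruct (HV (T a) VTa) as [r2 [Hr2 H2]].
    destruct (C2 r1 Hr1) as [K1 HK1]. destruct (C3 r2 Hr2) as [K2 HK2].
    set (K := max K1 K2).
    specialize (HK1 K ltac:(unfold K; lia)). specialize (HK2 K ltac:(unfold K; lia)).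
    unfold R_dist in *. rewrite Rminus_0_r in *.
    rewrite Rabs_right in HK1, HK2 by (apply Rle_ge, rho_nonneg).
    apply (Hdis (x (S (m K)))). split. apply H1. exact HK1. apply H2. exact HK2. }
  exists a. split. exact Hfix. intros y Hy. apply uniq; auto.
Qed.
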